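(* Let $K\ge1$, $N\ge1$ and $\bm m=(m_1,\dots,m_N)\in[0,1]^N$, and let $\mu=\frac1N\sum_{n=1}^N m_n$ and $\bar{\bm m}=(\mu,\dots,\mu)\in[0,1]^N$. Then $D^*(\bm m)=D^*(\bar{\bm m})$, i.e. the optimal normalized download cost of PIR from databases with heterogeneous storage sizes $\bm m$ equals that of PIR from databases with homogeneous storage size $\mu$ each.
   Context: For a storage vector $\bm m\in[0,1]^N$, $D^*(\bm m)$ denotes the optimal normalized download cost of the following problem. There are $K$ independent messages $W_1,\dots,W_K$ of $L$ i.i.d. uniform bits each, and $N$ non-colluding databases; database $n$ stores $Z_n$ with $H(Z_n)\le m_nKL$, using uncoded placement: each $Z_n$ is a subset of the message bits, designed centrally; $W_{k,\mathcal S}$ denotes the bits of $W_k$ stored exactly at the databases in $\mathcal S\subseteq[N]$. A user wanting $W_\theta$ sends queries $Q_n^{[\theta]}$ independent of the messages; database $n$ answers $A_n^{[\theta]}$, a deterministic function of $Q_n^{[\theta]}$ and $Z_n$. Privacy: $(Q_n^{[\theta]},A_n^{[\theta]},W_{1:K})$ has the same distribution for every $\theta\in[K]$, for each $n$. Reliability: $H(W_\theta\mid Q_{1:N}^{[\theta]},A_{1:N}^{[\theta]})=o(L)$. The download cost is $D=\sum_n H(A_n^{[\theta]})$, and $D^*(\bm m)$ is the infimum of the limiting $D/L$ over all admissible placements and schemes (equal to $+\infty$ if none exists). Equivalently, $D^*(\bm m)$ is the optimal value of the linear program: minimize $\sum_{\emptyset\ne\mathcal S\subseteq[N]}\alpha_{\mathcal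 S}\big(1+\frac1{|\mathcal S|}+\dots+\frac1{|\mathcal S|^{K-1}}\big)$ over $\alpha_{\mathcal S}\ge0$ subject to $\sum_{\mathcal S\ne\emptyset}\alpha_{\mathcal S}=1$ and $\sum_{\mathcal S\ni n}\alpha_{\mathcal S}\le m_n$ for all $n\in[N]$. *)

(* Defs.v *)
From HB Require Import structures.
From mathcomp Require Import all_boot all_order all_algebra.
From mathcomp Require Import classical_sets reals constructive_ereal ereal.
Set Implicit Arguments. Unset Strict Implicit. Unset Printing Implicit Defensive.
Import Order.TTheory GRing.Theory Num.Theory.
Local Open Scope ring_scope.

Definition pir_weight (R : realType) (K : nat) (N : nat) (S : {set 'I_N}) : R :=
  \sum_(i < K) ((#|S|%:R : R)^-1) ^+ i.

(* Feasible allocations alpha_S, S ranging over nonempty subsets of [N]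
   (the value at set0 is irrelevant: it never appears). *)
Definition pir_feasible (R : realType) (N : nat) (m : 'I_N -> R)
    (alpha : {set 'I_N} -> R) : Prop :=
  [/\ forall S : {set 'I_N}, S != finset.set0 -> 0 <= alpha S,
      \sum_(S : {set 'I_N} | S != finset.set0) alpha S = 1 &
      forall n : 'I_N, \sum_(S : {set 'I_N} | (S != finset.set0) && (n \in S)) alpha S <= m n].

Definition pir_cost (R : realType) (K N : nat) (alpha : {set 'I_N} -> R) : R :=
  \sum_(S : {set 'I_N} | S != finset.set0) alpha S * pir_weight R K S.

(* D^*(m): optimal value of the LP, as an extended real (+oo if infeasible). *)
Definition Dstar (R : realType) (K N : nat) (m : 'I_N -> R) : \bar R :=
  ereal_inf [set (pir_cost K alpha)%:E | alpha in pir_feasible m]%classic.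

(* Main.v *)
Require Import Defs.
From HB Require Import structures.
From mathcomp Require Import all_boot all_order all_algebra.
From mathcomp Require Import classical_sets reals constructive_ereal ereal.
From mathcomp Require Import ring lra zify.
Import Order.TTheory GRing.Theory Num.Theory.
Local Open Scope ring_scope.

Section W.
Variable R : realType.
Variable K : nat.

Definition wn (s : nat) : R := \sum_(i < K) ((s%:R : R)^-1) ^+ i.

Lemma inv_le (a b : nat) : (0 < a)%N -> (a <= b)%N -> (b%:R : R)^-1 <= (a%:R)^-1.
Proof.
move=> a0 ab; rewrite lef_pV2 ?posrE ?ltr0n ?ler_nat //; lia.
Qed.

Lemma term_convex (s i : nat) : (0 < s)%N ->
  2 * ((s.+1%:R : R)^-1)^+i <= ((s%:R : R)^-1)^+i + ((s.+2%:R : R)^-1)^+i.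
Proof.
move=> s0.
set x := (s%:R : R)^-1; set y := (s.+2%:R : R)^-1; set z := (s.+1%:R : R)^-1.
have x0 : 0 <= x by rewrite invr_ge0 ler0n.
have y0 : 0 <= y by rewrite invr_ge0 ler0n.
have z0 : 0 <= z by rewrite invr_ge0 ler0n.
have hz : z * z <= x * y.
  rewrite /x /y /z -!invfM -!natrM lef_pV2 ?posrE ?ltr0n ?ler_nat //; lia.
have hZ : (z ^+ i) * (z ^+ i) <= (x ^+ i) * (y ^+ i).
  rewrite -!exprMn; apply: lerXn2r => //; rewrite nnegrE ?mulr_ge0 //.
have X0 : 0 <= x ^+ i by rewrite exprn_ge0.
have Y0 : 0 <= y ^+ i by rewrite exprn_ge0.
have Z0 : 0 <= z ^+ i by rewrite exprn_ge0.
move: hZ X0 Y0 Z0; set X := x ^+ i; set Y := y ^+ i; set Z := z ^+ i => hZ X0 Y0 Z0.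
have h1 : 4 * (Z * Z) <= (X + Y) * (X + Y).
  have e : (X+Y)*(X+Y) = (X-Y)*(X-Y) + 4*(X*Y) by ring.
  rewrite e; have := sqr_ge0 (X - Y); rewrite expr2; lra.
rewrite leNgt; apply/negP => h2.
have h3 : (X + Y) * (X + Y) < (2 * Z) * (2 * Z).
  apply: (@le_lt_trans _ _ ((X + Y) * (2 * Z))).
    apply: ler_wpM2l; lra.
  rewrite ltr_pM2r; lra.
lra.
Qed.

Definition dw (s : nat) : R := wn s - wn s.+1.

Lemma dw_ge0 s : (0 < s)%N -> 0 <= dw s.
Proof.
move=> s0; rewrite /dw subr_ge0 /wn; apply: ler_sum => i _.
apply: lerXn2r; rewrite ?nnegrE ?invr_ge0 ?ler0n //.
by apply: inv_le.
Qed.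

Lemma dw_decr s : (0 < s)%N -> dw s.+1 <= dw s.
Proof.
move=> s0; rewrite /dw.
suff : 2 * wn s.+1 <= wn s + wn s.+2 by lra.
rewrite /wn mulr_sumr -big_split /=; apply: ler_sum => i _.
exact: term_convex.
Qed.

Lemma dw_mono k j : (0 < k)%N -> (k <= j)%N -> dw j <= dw k.
Proof.
move=> k0; elim: j => [|j IH] kj; first by lia.
case: (ltngtP k j.+1) kj => // [kj _|<- _]; last by [].
apply: (@le_trans _ _ (dw j)); [apply: dw_decr | apply: IH]; lia.
Qed.

Lemma wn_lb k s : (0 < k)%N -> (0 < s)%N ->
  wn k * (k.+1%:R - s%:R) + wn k.+1 * (s%:R - k%:R) <= wn s.
Proof.
move=> k0 s0.
have E : wn k * (k.+1%:R - s%:R) + wn k.+1 * (s%:R - k%:R)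
   = wn k - dw k * (s%:R - k%:R).
  rewrite /dw -addn1 natrD; ring.
rewrite E; clear E; case: (leqP k s) => ks.
  elim: s s0 ks => [|s IH] s0 ks; first by lia.
  case: (ltngtP k s.+1) ks => // [ks _|<- _]; last by rewrite subrr mulr0 subr0.
  have := IH ltac:(lia) ltac:(lia).
  have := @dw_mono k s k0 ltac:(lia).
  rewrite /dw ?mulrS => h1 h2. lra.
have [n Hn] : exists n, k = (s + n)%N by exists (k - s)%N; lia.
elim: n s s0 ks Hn => [|n IH] s s0 ks Hn; first by lia.
case: (ltngtP (s.+1) k) => h.
- have := IH s.+1 ltac:(lia) h ltac:(lia).
  have := @dw_mono s k s0 ltac:(lia).
  rewrite /dw ?mulrS => h1 h2. lra.
- lia.
- have := @dw_mono s k s0 ltac:(lia).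
  rewrite -h /dw ?mulrS => h1. lra.
Qed.

End W.
Section C.
Variable R : realType.
Variable T : finType.
Implicit Types (alpha : {set T} -> R).

Definition load alpha (n : T) : R := \sum_(S : {set T}) alpha S * (n \in S)%:R.

Lemma card_sum (S : {set T}) : (#|S|%:R : R) = \sum_(n : T) (n \in S)%:R.
Proof.
rewrite -sum1_card natr_sum big_mkcond /=; apply: eq_bigr => n _.
by case: (n \in S).
Qed.

Lemma double_count alpha (P : pred {set T}) :
  \sum_(S | P S) alpha S * #|S|%:R = \sum_(n : T) \sum_(S | P S) alpha S * (n \in S)%:R.
Proof.
rewrite exchange_big; apply: eq_bigr => S _.
by rewrite card_sum mulr_sumr.
Qed.

Lemma reindex_x (x : T) (G : {set T} -> R) :
  \sum_(S : {set T} | x \in S) G S = \sum_(S : {set T} | x \notin S) G (x |: S).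
Proof.
rewrite (reindex_onto (fun S : {set T} => x |: S) (fun S : {set T} => S :\ x)) /=; last first.
  by move=> S xS; rewrite finset.setD1K.
apply: eq_bigl => S; rewrite finset.setU11 /=.
case xS: (x \in S) => /=.
  apply/eqP => h; have : x \in (x |: S) :\ x by rewrite h.
  by rewrite finset.setD11.
by rewrite finset.setU1K ?xS // eqxx.
Qed.

Definition ext (x : T) (th : nat -> R) alpha (S : {set T}) : R :=
  if x \in S then th #|S :\ x| * alpha (S :\ x) else (1 - th #|S|) * alpha S.

Lemma master (x : T) (th : nat -> R) alpha (f : {set T} -> R) :
  (forall S : {set T}, x \in S -> alpha S = 0) ->
  \sum_(S : {set T}) ext x th alpha S * f S =
  \sum_(S : {set T}) alpha S * (th #|S| * f (x |: S) + (1 - th #|S|) * f S).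
Proof.
move=> a0.
rewrite (bigID (fun S : {set T} => x \in S)) /= [RHS](bigID (fun S : {set T} => x \in S)) /=.
rewrite [X in _ = X + _]big1 ?add0r; last by move=> S xS; rewrite a0 // mul0r.
rewrite reindex_x -big_split /=; apply: eq_bigr => S xS.
rewrite /ext finset.setU11 (negbTE xS) finset.setU1K //; ring.
Qed.

Definition good (m : T -> R) (U : {set T}) (k : nat) alpha :=
  [/\ forall S, 0 <= alpha S, \sum_(S : {set T}) alpha S = 1,
      forall S, alpha S != 0 -> (S \subset U) && ((#|S| == k) || (#|S| == k.+1))
    & forall n, n \in U -> load alpha n = m n].

Lemma sizes_sum alpha k (g : nat -> R) :
  (forall S, alpha S != 0 -> (#|S| == k) || (#|S| == k.+1)) ->
  \sum_(S : {set T}) alpha S * g #|S| =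
  g k * \sum_(S : {set T}) alpha S * (#|S| == k)%:R + g k.+1 * \sum_(S : {set T}) alpha S * (#|S| == k.+1)%:R.
Proof.
move=> H; rewrite !mulr_sumr -big_split; apply: eq_bigr => S _ /=.
case: (eqVneq (alpha S) 0) => [->|h]; first by rewrite !mul0r !mulr0 addr0.
have F1 : (k == k.+1) = false by lia.
have F2 : (k.+1 == k) = false by lia.
by case/orP: (H S h) => /eqP ->; rewrite eqxx ?F1 ?F2 /=; ring.
Qed.

Lemma good_size m U k alpha : good m U k alpha ->
  \sum_(S : {set T}) alpha S * #|S|%:R = \sum_(n in U) m n.
Proof.
case=> a0 a1 asupp aload.
rewrite (double_count alpha predT) (bigID (fun n => n \in U)) /=.
rewrite [X in _ + X]big1 ?addr0; last first.
  move=> n nU; apply: big1 => S _.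
  case: (eqVneq (alpha S) 0) => [->|h]; first by rewrite mul0r.
  case/andP: (asupp S h) => /fintype.subsetP sU _.
  case nS: (n \in S); last by rewrite mulr0.
  by move: nU; rewrite (sU n nS).
by apply: eq_bigr => n nU; rewrite -aload.
Qed.


Lemma good_x0 m U k alpha x : good m (U :\ x) k alpha ->
  forall S : {set T}, x \in S -> alpha S = 0.
Proof.
case=> _ _ sup _ S xS; apply/eqP; apply: contraT => h.
case/andP: (sup S h) => /fintype.subsetP sU _.
by move: (sU x xS); rewrite finset.setD11.
Qed.

Lemma ext_common m U k alpha x (th : nat -> R) :
  good m (U :\ x) k alpha -> x \in U -> (forall s, 0 <= th s <= 1) ->
  [/\ forall S, 0 <= ext x th alpha S,
      \sum_(S : {set T}) ext x th alpha S = 1,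
      forall n, n \in U :\ x -> load (ext x th alpha) n = m n,
      load (ext x th alpha) x = \sum_(S : {set T}) alpha S * th #|S|
    & forall S, ext x th alpha S != 0 -> S \subset U].
Proof.
move=> g xU thb; have a0 := @good_x0 _ _ _ _ _ g.
case: g => ap a1 sup ld.
split.
- move=> S; rewrite /ext; case: (x \in S); apply: mulr_ge0 => //.
    by case/andP: (thb #|S :\ x|).
  by case/andP: (thb #|S|) => _; rewrite subr_ge0.
- have := master x th alpha (fun _ => 1) a0; rewrite /=.
  under eq_bigr do rewrite mulr1.
  move=> ->; rewrite -[RHS]a1; apply: eq_bigr => S _; ring.
- move=> n nU; rewrite /load master // -ld //; apply: eq_bigr => S _.
  have nx : n != x by move: nU; rewrite in_setD1 => /andP [].
  by rewrite in_setU1 (negbTE nx) /=; ring.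
- rewrite /load master //; apply: eq_bigr => S _.
  case xS: (x \in S); first by rewrite a0 // !mul0r.
  by rewrite finset.setU11 /=; ring.
- move=> S; rewrite /ext; case xS: (x \in S) => h.
    apply/fintype.subsetP => y yS.
    case: (eqVneq y x) => [->//|yx].
    have h2 : alpha (S :\ x) != 0 by apply: contraNneq h => ->; rewrite mulr0.
    case/andP: (sup _ h2) => /fintype.subsetP sU _.
    have : y \in U :\ x by apply: sU; rewrite in_setD1 yx.
    by rewrite in_setD1 => /andP [].
  have h2 : alpha S != 0 by apply: contraNneq h => ->; rewrite mulr0.
  case/andP: (sup _ h2) => sU _.
  apply: (fintype.subset_trans sU); exact: subD1set.
Qed.


Lemma cardD1S (S : {set T}) x : x \in S -> #|S| = #|S :\ x|.+1.
Proof. by move=> xS; rewrite (cardsD1 x S) xS. Qed.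

Lemma construct (m : T -> R) (hm : forall n, 0 <= m n <= 1) (n : nat) :
  forall (U : {set T}) (k : nat), #|U| = n ->
  k%:R <= \sum_(i in U) m i < k.+1%:R -> exists alpha, good m U k alpha.
Proof.
elim: n => [|n IH] U k hU ht.
  move/eqP: hU; rewrite cards_eq0 => /eqP hU; subst U.
  move: ht; rewrite big_set0 => /andP [k0 _].
  have {k0} k0 : k = 0%N by apply/eqP; move: k0; rewrite lern0.
  subst k.
  exists (fun S : {set T} => (S == finset.set0)%:R); split.
  - by move=> S; rewrite ler0n.
  - rewrite (bigD1 finset.set0) //= eqxx big1 ?addr0 // => S /negbTE ->; by [].
  - move=> S; case: (eqVneq S finset.set0) => [->|hS] h; first by rewrite finset.sub0set cards0.
    by move: h; rewrite eqxx.
  - by move=> i; rewrite finset.in_set0.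
have [x xU] : exists x, x \in U by apply/set0Pn; rewrite -card_gt0 hU.
have hU' : #|U :\ x| = n by have := @cardD1S _ x xU; rewrite hU => -[].
rewrite (big_setD1 x xU) /= in ht.
move: ht; set p := m x; set t' := \sum_(i in U :\ x) m i => ht.
have t'0 : 0 <= t' by apply: sumr_ge0 => i _; case/andP: (hm i).
have [p0 p1] : 0 <= p /\ p <= 1 by case/andP: (hm x).
case: (leP (k%:R) t') => kt.
- have ht' : k%:R <= t' < k.+1%:R by apply/andP; split => //; lra.
  have [al g] := IH (U :\ x) k hU' ht'.
  have sz : forall S, al S != 0 -> (#|S| == k) || (#|S| == k.+1).
    by move=> S h; case: g => _ _ sup _; case/andP: (sup S h).
  have e1 := @sizes_sum al k (fun _ => 1) sz.
  have e2 := @sizes_sum al k (fun s => s%:R) sz.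
  have gs := @good_size _ _ _ _ g.
  move: e1 e2 gs; case: (g) => _ a1 _ _.
  under eq_bigr do rewrite mulr1.
  rewrite a1 /= => e1 e2 gs; rewrite -/t' in gs; rewrite gs in e2.
  move: e1 e2.
  set a := \sum_(S : {set T}) al S * (#|S| == k)%:R.
  set b := \sum_(S : {set T}) al S * (#|S| == k.+1)%:R => e1 e2.
  rewrite -[k.+1]addn1 natrD in e2.
  have eb' : b = 1 - a by lra.
  rewrite eb' in e2.
  have e3 : t' = k%:R + 1 - a by rewrite e2; ring.
  have ea : a = k%:R + 1 - t' by lra.
  have apos : p < a by rewrite -[k.+1]addn1 natrD in ht; lra.
  pose th := fun s : nat => if s == k then p / a else 0.
  have thb : forall s, 0 <= th s <= 1.
    move=> s; rewrite /th; case: (s == k); last by rewrite lexx ler01.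
    rewrite divr_ge0 //= ?ler_pdivrMr ?mul1r; lra.
  have [c1 c2 c3 c4 c5] := @ext_common _ _ _ _ _ _ g xU thb.
  exists (ext x th al); split => //.
  + move=> S h; rewrite c5 //=.
    move: h; rewrite /ext; case xS: (x \in S) => h.
      have h1 : th #|S :\ x| != 0 by apply: contraNneq h => ->; rewrite mul0r.
      rewrite (@cardD1S _ x xS); move: h1; rewrite /th.
      case: (eqVneq #|S :\ x| k) => [-> _|_]; first by rewrite eqxx orbT.
      by rewrite eqxx.
    by apply: sz; apply: contraNneq h => ->; rewrite mulr0.
  + move=> i iU; case: (eqVneq i x) => [->|ix]; last by apply: c3; rewrite in_setD1 ix.
    rewrite c4 (@sizes_sum al k th sz) /th eqxx.
    have -> : (k.+1 == k) = false by rewrite eqn_leq ltnn.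
    have apos' : 0 < a by lra.
    have anz : a != 0 by rewrite gt_eqF.
    by rewrite mul0r addr0 -/a divfK.
- case: k ht kt => [|k] ht kt; first by move: kt; rewrite ltNge t'0.
  have ht' : k%:R <= t' < k.+1%:R.
    by apply/andP; split => //; rewrite -[k.+1]addn1 natrD in ht; lra.
  have [al g] := IH (U :\ x) k hU' ht'.
  have sz : forall S, al S != 0 -> (#|S| == k) || (#|S| == k.+1).
    by move=> S h; case: g => _ _ sup _; case/andP: (sup S h).
  have e1 := @sizes_sum al k (fun _ => 1) sz.
  have e2 := @sizes_sum al k (fun s => s%:R) sz.
  have gs := @good_size _ _ _ _ g.
  move: e1 e2 gs; case: (g) => _ a1 _ _.
  under eq_bigr do rewrite mulr1.
  rewrite a1 /= => e1 e2 gs; rewrite -/t' in gs; rewrite gs in e2.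
  move: e1 e2.
  set a := \sum_(S : {set T}) al S * (#|S| == k)%:R.
  set b := \sum_(S : {set T}) al S * (#|S| == k.+1)%:R => e1 e2.
  rewrite -[k.+1]addn1 natrD in e2.
  have ea' : a = 1 - b by lra.
  rewrite ea' in e2.
  have e3 : t' = k%:R + b by rewrite e2; ring.
  have eb : b = t' - k%:R by lra.
  have pa : a <= p by rewrite -[k.+1]addn1 natrD in ht; lra.
  have pb : p - a <= b by lra.
  pose th := fun s : nat => if s == k then 1 else if s == k.+1 then (p - a) / b else 0.
  have thb : forall s, 0 <= th s <= 1.
    move=> s; rewrite /th; case: (s == k); first by rewrite lexx ler01.
    case: (s == k.+1); last by rewrite lexx ler01.
    case: (eqVneq b 0) => [->|b0]; first by rewrite invr0 mulr0 lexx ler01.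
    have bpos : 0 < b by rewrite lt0r b0 /= eb; lra.
    rewrite divr_ge0 //= ?ler_pdivrMr ?mul1r; lra.
  have [c1 c2 c3 c4 c5] := @ext_common _ _ _ _ _ _ g xU thb.
  exists (ext x th al); split => //.
  + move=> S h; rewrite c5 //=.
    move: h; rewrite /ext; case xS: (x \in S) => h.
      have h2 : al (S :\ x) != 0 by apply: contraNneq h => ->; rewrite mulr0.
      by rewrite (@cardD1S _ x xS) !eqSS; apply: sz.
    have h2 : al S != 0 by apply: contraNneq h => ->; rewrite mulr0.
    case/orP: (sz S h2) => /eqP hS; last by rewrite hS eqxx.
    by move: h; rewrite /th hS eqxx subrr mul0r eqxx.
  + move=> i iU; case: (eqVneq i x) => [->|ix]; last by apply: c3; rewrite in_setD1 ix.
    rewrite c4 (@sizes_sum al k th sz) /th eqxx.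
    have -> : (k.+1 == k) = false by rewrite eqn_leq ltnn.
    rewrite eqxx mul1r -/a -/b.
    case: (eqVneq b 0) => [b0|b0]; last by rewrite divfK // -/p; lra.
    rewrite b0 mulr0 addr0 -/p; lra.
Qed.

End C.

Section F.
Variable R : realType.
Variable K N : nat.
Implicit Types (m : 'I_N -> R) (alpha : {set 'I_N} -> R).

Definition ell (k : nat) (t : R) : R :=
  wn R K k * (k.+1%:R - t) + wn R K k.+1 * (t - k%:R).

Lemma sum_filter_in alpha (P : pred {set 'I_N}) (n : 'I_N) :
  \sum_(S | P S) alpha S * (n \in S)%:R = \sum_(S | P S && (n \in S)) alpha S.
Proof.
rewrite big_mkcondr /=; apply: eq_bigr => S _.
by case: (n \in S); rewrite ?mulr1 ?mulr0.
Qed.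

Lemma LB m alpha : pir_feasible m alpha ->
  1 <= \sum_n m n /\
  (forall k : nat, k%:R <= \sum_n m n < k.+1%:R -> ell k (\sum_n m n) <= pir_cost K alpha).
Proof.
case=> a0 a1 ald.
set t := \sum_n m n.
set L := \sum_(S : {set 'I_N} | S != finset.set0) alpha S * #|S|%:R.
have Lt : L <= t.
  rewrite /L double_count /t; apply: ler_sum => n _.
  by rewrite sum_filter_in.
have L1 : 1 <= L.
  rewrite -a1 /L; apply: ler_sum => S S0.
  rewrite -{1}[alpha S]mulr1; apply: ler_wpM2l => //; first exact: a0.
  by rewrite ler1n card_gt0.
split; first lra.
move=> k /andP [kt tk].
have k0 : (0 < k)%N.
  rewrite lt0n; apply/eqP => k0; subst k; move: tk; rewrite ltNge.
  by have -> : 1%:R <= t by lra.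
rewrite /pir_cost.
apply: (@le_trans _ _ (\sum_(S : {set 'I_N} | S != finset.set0)
   alpha S * ell k #|S|%:R)).
  rewrite (eq_bigr (fun S => (wn R K k * k.+1%:R - wn R K k.+1 * k%:R) * alpha S
       + (wn R K k.+1 - wn R K k) * (alpha S * #|S|%:R))); last first.
    by move=> S _; rewrite /ell; ring.
  rewrite big_split /= -!mulr_sumr a1 -/L /ell.
  have d0 := @dw_ge0 R K k k0.
  rewrite /dw in d0.
  have h := mulr_ge0 d0 (ltac:(rewrite subr_ge0; exact: Lt) : 0 <= t - L).
  nra.
apply: ler_sum => S S0; apply: ler_wpM2l; first exact: a0.
rewrite /pir_weight; apply: wn_lb => //.
by rewrite card_gt0.
Qed.


Lemma attain m (hm : forall n, 0 <= m n <= 1) (k : nat) : (0 < k)%N ->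
  k%:R <= \sum_n m n < k.+1%:R ->
  exists alpha, pir_feasible m alpha /\ pir_cost K alpha = ell k (\sum_n m n).
Proof.
move=> k0 kt.
have eT : \sum_(i in [set: 'I_N]) m i = \sum_n m n.
  by apply: eq_bigl => i; rewrite finset.in_setT.
have ht : k%:R <= \sum_(i in [set: 'I_N]) m i < k.+1%:R by rewrite eT.
have hc : #|[set: 'I_N]| = N by rewrite cardsT card_ord.
have [al g] := @construct R _ m hm N _ k hc ht.
have gs := @good_size _ _ _ _ _ _ g.
rewrite eT in gs.
case: g => a0 a1 sup ld.
have al0 : al finset.set0 = 0.
  apply/eqP; apply: contraT => h; have := sup _ h; rewrite cards0.
  have -> : (0 == k) = false by apply/negbTE; rewrite eq_sym -lt0n.
  by rewrite andbF.
have sz : forall S, al S != 0 -> (#|S| == k) || (#|S| == k.+1).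
  by move=> S h; case/andP: (sup S h).
exists al; split.
  split.
  - by move=> S _; apply: a0.
  - by move: a1; rewrite (bigD1 finset.set0) //= al0 add0r.
  - move=> n; have := ld n (finset.in_setT n).
    rewrite /load (bigD1 finset.set0) //= al0 mul0r add0r sum_filter_in => ->.
    by [].
have e1 := @sizes_sum _ _ al k (fun _ => 1) sz.
have e2 := @sizes_sum _ _ al k (fun s => s%:R) sz.
have e3 := @sizes_sum _ _ al k (wn R K) sz.
move: e1 e2 e3; under eq_bigr do rewrite mulr1.
rewrite a1 gs => e1 e2 e3.
rewrite /pir_cost.
have -> : \sum_(S : {set 'I_N} | S != finset.set0) al S * pir_weight R K S
        = \sum_(S : {set 'I_N}) al S * wn R K #|S|.
  by rewrite [RHS](bigD1 finset.set0) //= al0 mul0r add0r.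
rewrite e3.
move: e1 e2.
set a := \sum_(S : {set 'I_N}) al S * (#|S| == k)%:R.
set b := \sum_(S : {set 'I_N}) al S * (#|S| == k.+1)%:R => e1 e2.
rewrite -[k.+1]addn1 natrD in e2.
have ea' : a = 1 - b by lra.
rewrite ea' in e2.
set t := \sum_n m n in e2 *.
have eb : b = t - k%:R by rewrite e2; ring.
rewrite /ell ea' eb -[k.+1]addn1 natrD; ring.
Qed.

Lemma Dstar_char m (hm : forall n, 0 <= m n <= 1) :
  Dstar K m = if \sum_n m n < 1 then +oo%E
              else (ell (Num.trunc (\sum_n m n)) (\sum_n m n))%:E.
Proof.
case: ifP => t1.
  apply/eqP; rewrite eq_le leey /=; apply/ereal_infP => y [al hal <-].
  have [h _] := LB m al hal; by move: t1; rewrite ltNge h.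
have t0 : 0 <= \sum_n m n by apply: sumr_ge0 => n _; case/andP: (hm n).
have kt := truncn_itv t0.
have k0 : (0 < Num.trunc (\sum_n m n))%N by rewrite truncn_gt0 leNgt t1.
apply/le_anti/andP; split.
  have [al [hal hc]] := @attain m hm _ k0 kt.
  by apply: ereal_inf_lbound; exists al => //; rewrite hc.
apply/ereal_infP => y [al hal <-]; rewrite lee_fin.
by have [_ h] := LB m al hal; apply: h.
Qed.

End F.

Theorem theorem2 (R : realType) (K N : nat) (m : 'I_N -> R) :
  (1 <= K)%N -> (1 <= N)%N ->
  (forall n : 'I_N, 0 <= m n <= 1) ->
  Dstar K m = Dstar K (fun _ : 'I_N => (\sum_(n < N) m n) / N%:R).
Proof.
move=> _ N1 hm.
set t := \sum_(n < N) m n.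
have t0 : 0 <= t by apply: sumr_ge0 => n _; case/andP: (hm n).
have tN : t <= N%:R.
  rewrite /t -[N in N%:R]card_ord -sumr_const; apply: ler_sum => n _.
  by case/andP: (hm n).
have Npos : 0 < (N%:R : R) by rewrite ltr0n.
have hm' : forall n : 'I_N, 0 <= t / N%:R <= 1.
  move=> n; rewrite divr_ge0 ?ler0n //= ler_pdivrMr // mul1r //.
have es : \sum_(n < N) (t / N%:R) = t.
  rewrite sumr_const card_ord -(mulr_natr (t / N%:R)) divfK //; by rewrite gt_eqF.
rewrite (@Dstar_char R K N _ hm) (@Dstar_char R K N _ hm') es.
by [].
Qed.
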